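(* For each positive integer $k$, let $z_k$ be the optimal value of the program \[ \max \frac{\sum_{j=1}^k \alpha_j}{f+\sum_{j=1}^k d_j}\ \text{ s.t. } \alpha_j\le\alpha_{j+1}\ (1\le j<k);\ \sqrt{\alpha_j}\le\sqrt{\alpha_l}+\sqrt{d_j}+\sqrt{d_l}\ (1\le j,l\le k);\ \sum_{l=j}^k\max(\alpha_j-d_l,0)\le f\ (1\le j\le k);\ \alpha_j,d_j,f\ge0. \] Then $\sup_{k \ge 1} z_k \ge 2.86$.
   Context: The maximum is taken over feasible points with $f+\sum_j d_j>0$. *)

(* Defs.v *)
From HB Require Import structures.
From mathcomp Require Import all_boot all_order all_algebra.
From mathcomp Require Import all_classical all_reals.
From mathcomp Require Import ereal.
Set Implicit Arguments. Unset Strict Implicit. Unset Printing Implicit Defensive.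
Import Order.TTheory GRing.Theory Num.Theory.
Local Open Scope ring_scope.
Local Open Scope classical_set_scope.

(* Variables alpha_1..alpha_k, d_1..d_k are the values a 1..a k, d 1..d k
   of sequences a d : nat -> R (values outside 1..k are irrelevant). *)
Definition feasible (R : realType) (k : nat) (a d : nat -> R) (f : R) : Prop :=
  [/\ (forall j : nat, (1 <= j < k)%N -> a j <= a j.+1),
      (forall j l : nat, (1 <= j <= k)%N -> (1 <= l <= k)%N ->
          Num.sqrt (a j) <= Num.sqrt (a l) + Num.sqrt (d j) + Num.sqrt (d l)),
      (forall j : nat, (1 <= j <= k)%N ->
          \sum_(j <= l < k.+1) Num.max (a j - d l) 0 <= f),
      (forall j : nat, (1 <= j <= k)%N -> 0 <= a j /\ 0 <= d j)
    & 0 <= f].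

Definition objective (R : realType) (k : nat) (a d : nat -> R) (f : R) : R :=
  (\sum_(1 <= j < k.+1) a j) / (f + \sum_(1 <= j < k.+1) d j).

Definition zval (R : realType) (k : nat) : \bar R :=
  ereal_sup [set x : \bar R | exists (a d : nat -> R) (f : R),
     [/\ feasible k a d f, 0 < f + \sum_(1 <= j < k.+1) d j
        & x = (objective k a d f)%:E]].

(* Main.v *)
Require Import Defs.
From Stdlib Require Import ZArith Lia.
From HB Require Import structures.
From mathcomp Require Import all_boot all_order all_algebra.
From mathcomp Require Import all_classical all_reals.
From mathcomp Require Import ereal.
From mathcomp Require Import ssrZ.
From mathcomp Require Import ring lra.
Import Order.TTheory GRing.Theory Num.Theory.
Local Open Scope ring_scope.
Local Open Scope classical_set_scope.

Section ZR.
Variable R : realType.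
Definition zR (z : Z) : R := (int_of_Z z)%:~R.

Lemma zRD a b : zR (Z.add a b) = zR a + zR b.
Proof. by rewrite /zR (raddfD int_of_Z a b) intrD. Qed.
Lemma zRN a : zR (Z.opp a) = - zR a.
Proof. by rewrite /zR (raddfN int_of_Z a) intrN. Qed.
Lemma zRB a b : zR (Z.sub a b) = zR a - zR b.
Proof. by rewrite -zRN -zRD. Qed.
Lemma zRM a b : zR (Z.mul a b) = zR a * zR b.
Proof. by rewrite /zR (rmorphM int_of_Z a b) intrM. Qed.
Lemma zR0 : zR Z0 = 0. Proof. by []. Qed.
Lemma zR_ge0 z : Z.le Z0 z -> 0 <= zR z.
Proof. by case: z => [|p|p] //= _; rewrite /zR ler0z. Qed.
Lemma zR_le a b : Z.le a b -> zR a <= zR b.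
Proof. move=> h; rewrite -subr_ge0 -zRB; apply: zR_ge0; lia. Qed.
Lemma zR_gt0 z : Z.lt Z0 z -> 0 < zR z.
Proof. by case: z => [|p|p] //= _; rewrite /zR ltr0z /= ltz_nat; lia. Qed.
End ZR.

Definition rowsum (Q p : Z) (s : seq Z) : Z :=
  foldr (fun q acc => Z.add (Z.max (Z.sub (Z.mul p p) (Z.mul (Z.sub Q q) (Z.sub Q q))) Z0) acc) Z0 s.
Definition sumsq (s : seq Z) : Z := foldr (fun q acc => Z.add (Z.mul q q) acc) Z0 s.
Definition sumdsq (Q : Z) (s : seq Z) : Z :=
  foldr (fun q acc => Z.add (Z.mul (Z.sub Q q) (Z.sub Q q)) acc) Z0 s.

Lemma sum_drop (R : realType) (h : Z -> R) (s : seq Z) (m : nat) :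
  \sum_(m <= l < size s) h (nth Z0 s l) = \sum_(q <- drop m s) h q.
Proof.
elim: s m => [|x s IH] m.
  by case: m => [|m]; rewrite !big_nil.
case: m => [|m].
  rewrite drop0 [RHS]big_cons [LHS]big_ltn //= big_add1 /=.
  by have := IH 0%N; rewrite drop0 => <-.
by rewrite /= big_add1 /= IH.
Qed.

Section Main.
Variable R : realType.
Variables (Q F : Z) (Pl : seq Z) (K : nat).
Hypothesis HQ : Z.lt Z0 Q.
Hypothesis HF : Z.lt Z0 F.
Hypothesis Hsize : size Pl = K.+1.
Hypothesis Hnn : all (fun j => Z.leb Z0 (nth Z0 Pl j)) (iota 1 K).
Hypothesis Hmono : all (fun j => Z.leb (nth Z0 Pl j) (nth Z0 Pl j.+1)) (iota 1 K.-1).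
Hypothesis Hrows : all (fun j => Z.leb (rowsum Q (nth Z0 Pl j) (drop j Pl)) F) (iota 1 K).
Hypothesis Hratio : Z.leb (Z.mul 286 (Z.add F (sumdsq Q (drop 1 Pl)))) (Z.mul 100 (sumsq (drop 1 Pl))).

Definition xv (j : nat) : R := zR R (nth Z0 Pl j) / zR R Q.
Definition av (j : nat) : R := xv j ^+ 2.
Definition dv (j : nat) : R := (1 - xv j) ^+ 2.
Definition fv : R := zR R F / zR R Q ^+ 2.

Let Qpos : 0 < zR R Q. Proof. exact: zR_gt0. Qed.

Lemma xv_ge0 j : (1 <= j <= K)%N -> 0 <= xv j.
Proof.
move=> hj; rewrite /xv divr_ge0 ?(ltW Qpos) //; apply: zR_ge0.
move/allP: Hnn => /(_ j); rewrite mem_iota; move=> H; apply/Z.leb_le; apply: H.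
by move: hj => /andP[h1 h2]; rewrite h1 /= addnC addn1 ltnS.
Qed.

Lemma maxdiv z : Num.max (zR R z / zR R Q ^+ 2) 0 = zR R (Z.max z Z0) / zR R Q ^+ 2.
Proof.
have Q2 : 0 < zR R Q ^+ 2 by rewrite exprn_gt0.
case: (Z.le_gt_cases Z0 z) => hz.
  rewrite Z.max_l //; apply/max_idPl; rewrite divr_ge0 ?(ltW Q2) //; exact: zR_ge0.
rewrite Z.max_r; last by lia.
rewrite zR0 mul0r; apply/max_idPr; apply: mulr_le0_ge0; last by rewrite invr_ge0 ltW.
by have := @zR_le R _ _ (Z.lt_le_incl _ _ hz); rewrite zR0.
Qed.

Lemma term_eq p q : (zR R p / zR R Q) ^+ 2 - (1 - zR R q / zR R Q) ^+ 2 =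
  zR R (Z.sub (Z.mul p p) (Z.mul (Z.sub Q q) (Z.sub Q q))) / zR R Q ^+ 2.
Proof.
rewrite zRB !zRM !zRB.
have hQ : zR R Q != 0 by rewrite gt_eqF.
by field.
Qed.

Lemma rowsum_eq p s : \sum_(q <- s) Num.max ((zR R p / zR R Q) ^+ 2 - (1 - zR R q / zR R Q) ^+ 2) 0
  = zR R (rowsum Q p s) / zR R Q ^+ 2.
Proof.
elim: s => [|q s IH]; first by rewrite big_nil zR0 mul0r.
by rewrite big_cons IH term_eq maxdiv /= zRD mulrDl.
Qed.

Lemma sumsq_eq s : \sum_(q <- s) (zR R q / zR R Q) ^+ 2 = zR R (sumsq s) / zR R Q ^+ 2.
Proof.
elim: s => [|q s IH]; first by rewrite big_nil zR0 mul0r.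
by rewrite big_cons IH /= zRD zRM mulrDl expr_div_n expr2.
Qed.

Lemma sumdsq_eq s : \sum_(q <- s) (1 - zR R q / zR R Q) ^+ 2 = zR R (sumdsq Q s) / zR R Q ^+ 2.
Proof.
elim: s => [|q s IH]; first by rewrite big_nil zR0 mul0r.
rewrite big_cons IH /= zRD zRM zRB mulrDl; congr (_ + _).
have hQ : zR R Q != 0 by rewrite gt_eqF.
by field.
Qed.

Lemma feas : feasible K av dv fv.
Proof.
split.
- move=> j /andP[h1 h2]; rewrite /av.
  have hx0 : 0 <= xv j by apply: xv_ge0; rewrite h1 (ltnW h2).
  have hx1 : 0 <= xv j.+1 by apply: xv_ge0; rewrite /= h2.
  rewrite ler_pXn2r // ?qualifE //=.
  rewrite /xv ler_pM2r ?invr_gt0 //; apply: zR_le.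
  move/allP: Hmono => /(_ j); rewrite mem_iota => H; apply/Z.leb_le; apply: H.
  rewrite h1 /=; case: K h2 => // n; by rewrite addnC addn1 ltnS.
- move=> j l hj hl; rewrite /av /dv !sqrtr_sqr.
  rewrite (ger0_norm (xv_ge0 j hj)) (ger0_norm (xv_ge0 l hl)).
  have h1 : xv j - 1 <= `|1 - xv j| by rewrite distrC ler_norm.
  have h2 : 1 - xv l <= `|1 - xv l| by rewrite ler_norm.
  lra.
- move=> j hj.
  rewrite -Hsize.
  rewrite (@sum_drop R (fun q => Num.max ((zR R (nth Z0 Pl j) / zR R Q) ^+ 2 - (1 - zR R q / zR R Q) ^+ 2) 0)).
  rewrite rowsum_eq /fv ler_pM2r ?invr_gt0 ?exprn_gt0 //; apply: zR_le.
  move/allP: Hrows => /(_ j); rewrite mem_iota => H; apply/Z.leb_le; apply: H.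
  by move: hj => /andP[h1 h2]; rewrite h1 /= addnC addn1 ltnS.
- by move=> j hj; rewrite /av /dv !sqr_ge0.
- rewrite /fv divr_ge0 ?exprn_ge0 ?(ltW Qpos) //; apply: zR_ge0; lia.
Qed.

Lemma sum_a : \sum_(1 <= j < K.+1) av j = zR R (sumsq (drop 1 Pl)) / zR R Q ^+ 2.
Proof.
rewrite -Hsize (@sum_drop R (fun q => (zR R q / zR R Q) ^+ 2)); exact: sumsq_eq.
Qed.

Lemma sum_d : \sum_(1 <= j < K.+1) dv j = zR R (sumdsq Q (drop 1 Pl)) / zR R Q ^+ 2.
Proof.
rewrite -Hsize (@sum_drop R (fun q => (1 - zR R q / zR R Q) ^+ 2)); exact: sumdsq_eq.
Qed.

Lemma sumdsq_ge0 s : Z.le Z0 (sumdsq Q s).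
Proof. elim: s => [|q s IH] /=; first lia. rewrite -/(sumdsq Q s); have := Z.square_nonneg (Z.sub Q q); lia. Qed.

Lemma pos : 0 < fv + \sum_(1 <= j < K.+1) dv j.
Proof.
rewrite sum_d /fv -mulrDl -zRD divr_gt0 ?exprn_gt0 //; apply: zR_gt0.
have := sumdsq_ge0 (drop 1 Pl); lia.
Qed.

Lemma obj : 286%:R / 100%:R <= objective K av dv fv.
Proof.
rewrite /objective sum_a sum_d /fv -mulrDl -zRD.
have hQ : zR R Q ^+ 2 != 0 by rewrite expf_neq0 // gt_eqF.
have hD : 0 < zR R (Z.add F (sumdsq Q (drop 1 Pl))).
  apply: zR_gt0; have := sumdsq_ge0 (drop 1 Pl); lia.
set A := zR R (sumsq _); set B := zR R (Z.add F _).
have -> : A / zR R Q ^+ 2 / (B / zR R Q ^+ 2) = A / B.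
  have hB : B != 0 by rewrite gt_eqF.
  have hc : zR R Q != 0 by rewrite gt_eqF.
  move: hB hc; set c := zR R Q; clearbody A B c => hB hc.
  by field; rewrite hB hc.
rewrite ler_pdivlMr // mulrAC ler_pdivrMr ?ltr0n //.
have -> : (286%:R : R) = zR R 286 by [].
have -> : (100%:R : R) = zR R 100 by [].
rewrite /A /B -!zRM; apply: zR_le.
move/Z.leb_le: Hratio; lia.
Qed.

End Main.

Section Data.
Local Open Scope Z_scope.
Definition Qd : Z := 1000000.
Definition Fd : Z := 187600359327734.
Definition Pd : seq Z := [:: 0;
  629513; 629864; 630215; 630568; 630923; 631278; 631635; 631993; 632352; 632713;
  633075; 633438; 633803; 634170; 634538; 634907; 635278; 635650; 636023; 636399;
  636775; 637153; 637532; 637912; 638294; 638678; 639063; 639449; 639837; 640226;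
  640617; 641010; 641404; 641800; 642197; 642596; 642996; 643398; 643801; 644206;
  644612; 645020; 645429; 645840; 646253; 646667; 647083; 647501; 647920; 648341;
  648764; 649189; 649615; 650042; 650471; 650902; 651334; 651768; 652204; 652642;
  653081; 653523; 653966; 654411; 654857; 655306; 655756; 656209; 656662; 657117;
  657574; 658033; 658494; 658957; 659421; 659888; 660356; 660827; 661299; 661773;
  662250; 662728; 663208; 663689; 664172; 664658; 665145; 665635; 666127; 666620;
  667116; 667614; 668114; 668616; 669120; 669626; 670133; 670643; 671155; 671669;
  672185; 672703; 673224; 673746; 674271; 674799; 675328; 675860; 676393; 676929;
  677466; 678006; 678548; 679093; 679640; 680189; 680741; 681295; 681851; 682410;
  682971; 683534; 684099; 684666; 685236; 685809; 686384; 686961; 687541; 688124;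
  688709; 689297; 689886; 690478; 691072; 691669; 692269; 692871; 693476; 694083;
  694694; 695307; 695922; 696541; 697160; 697783; 698409; 699037; 699668; 700302;
  700938; 701578; 702221; 702866; 703514; 704164; 704816; 705472; 706131; 706792;
  707457; 708125; 708795; 709469; 710146; 710825; 711507; 712191; 712879; 713570;
  714264; 714961; 715662; 716366; 717073; 717782; 718494; 719209; 719928; 720650;
  721375; 722104; 722835; 723571; 724310; 725051; 725795; 726543; 727294; 728048;
  728806; 729568; 730333; 731102; 731874; 732649; 733427; 734209; 734994; 735783;
  736576; 737372; 738173; 738977; 739784; 740594; 741408; 742225; 743047; 743873;
  744702; 745536; 746373; 747214; 748058; 748905; 749757; 750613; 751473; 752337;
  753206; 754078; 754954; 755833; 756716; 757604; 758496; 759392; 760293; 761198;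
  762108; 763020; 763936; 764857; 765782; 766712; 767647; 768586; 769530; 770477;
  771428; 772384; 773344; 774309; 775279; 776254; 777234; 778217; 779204; 780196;
  781193; 782195; 783202; 784215; 785232; 786253; 787278; 788308; 789344; 790384;
  791430; 792482; 793539; 794599; 795664; 796734; 797810; 798891; 799978; 801070;
  802168; 803269; 804375; 805487; 806605; 807729; 808859; 809995; 811134; 812278;
  813428; 814585; 815747; 816916; 818090; 819270; 820454; 821643; 822840; 824042;
  825251; 826467; 827688; 828913; 830144; 831382; 832627; 833878; 835136; 836400;
  837668; 838942; 840224; 841512; 842808; 844111; 845418; 846731; 848051; 849378;
  850712; 852054; 853403; 854756; 856116; 857483; 858858; 860240; 861630; 863027;
  864428; 865836; 867253; 868678; 870110; 871551; 872995; 874447; 875908; 877376;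
  878853; 880338; 881829; 883326; 884831; 886345; 887868; 889400; 890938; 892481;
  894034; 895596; 897166; 898746; 900333; 901925; 903527; 905137; 906758; 908388;
  910025; 911668; 913320; 914983; 916655; 918337; 920026; 921721; 923427; 925143;
  926869; 928605; 930348; 932098; 933859; 935631; 937413; 939206; 941004; 942811;
  944630; 946460; 948301; 950151; 952007; 953875; 955753; 957644; 959546; 961454;
  963372; 965302; 967244; 969197; 971162; 973132; 975114; 977109; 979117; 981136;
  983162; 985199; 987249; 989312; 991388; 993473; 995567; 997674; 999794; 1001928;
  1004074; 1006227; 1008393; 1010573; 1012767; 1014976; 1017189; 1019417; 1021659; 1023916;
  1026187; 1028465; 1030756; 1033063; 1035385; 1037722; 1040066; 1042424; 1044797; 1047186;
  1049591; 1052005; 1054431; 1056874; 1059333; 1061809; 1064293; 1066791; 1069306; 1071838;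
  1074388; 1076944; 1079517; 1082107; 1084715; 1087342; 1089974; 1092624; 1095292; 1097980;
  1100683; 1103395; 1106126; 1108876; 1111217; 1113372; 1115539; 1117717; 1119908; 1122111;
  1124327; 1126555; 1128795; 1131048; 1133314; 1135593; 1137884; 1140189; 1142506; 1144838;
  1147182; 1149540; 1151912; 1154297; 1156697; 1159110; 1161538; 1163979; 1166435; 1168906;
  1171392; 1173892; 1176407; 1178937; 1181483; 1184043; 1186620; 1189212; 1191819; 1194443;
  1197083; 1199739; 1202411; 1205100; 1207806; 1210529; 1213268; 1216025; 1218800; 1221592;
  1224401; 1227229; 1230074; 1232938; 1235821; 1238722; 1241642; 1244580; 1247539; 1250516;
  1253513; 1256531; 1259568; 1262625; 1265703; 1268802; 1271921; 1275062; 1278224; 1281407;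
  1284613; 1287840; 1291090; 1294363; 1297658; 1300977; 1304318; 1307684; 1311073; 1314486;
  1317924; 1321387; 1324874; 1328387; 1331926; 1335490; 1339081; 1342698; 1346342; 1350013;
  1353712; 1357438; 1361193; 1364976; 1368788; 1372630; 1376501; 1380401; 1384333; 1388295;
  1392288; 1396313; 1400370; 1404459; 1408581; 1412737; 1416926; 1421149; 1425407; 1429700;
  1434029; 1438393; 1442795; 1447233; 1451709; 1456223; 1460776; 1465368; 1470000; 1474673;
  1479386; 1484142; 1488939; 1493779; 1498663; 1503591; 1508564; 1513582; 1518647; 1523759;
  1528918; 1534126; 1539383; 1544691; 1550049; 1555459; 1560921; 1566437; 1572008; 1577634;
  1583316; 1589055; 1594852; 1600709; 1606626; 1612604; 1618645; 1624750; 1630919; 1637154;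
  1643456; 1649827; 1656268; 1662779; 1669363; 1676021; 1682755; 1689565; 1696454; 1703422;
  1710472; 1717606; 1724824; 1732129; 1739523; 1747008; 1754585; 1762257; 1770025; 1777893;
  1785861; 1793933; 1802111; 1810397; 1818794; 1827304; 1835931; 1844678; 1853546; 1862539;
  1871661; 1880915; 1890304; 1899832; 1909502; 1919319; 1929287; 1939408; 1949689; 1960134;
  1970747; 1981533; 1992498; 2003647; 2014985; 2026519; 2038255; 2050199; 2062359; 2074741;
  2087352; 2100202; 2109750; 2109750; 2109750; 2109750; 2109750; 2109750; 2109750; 2109750;
  2109750; 2109750; 2109750; 2109750; 2109750; 2109750; 2109750; 2109750; 2109750; 2109750;
  2109750; 2109750; 2109750; 2109750; 2109750; 2109750; 2109750; 2109750; 2109750; 2109750;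
  2109750; 2109750; 2109750; 2109750; 2109750; 2109750; 2109750; 2109750; 2109750; 2109750;
  2109750; 2109750; 2109750; 2109750; 2109750; 2109750; 2109750; 2109750; 2109750; 2109750;
  2109750; 2109750; 2109750; 2109750; 2109750; 2109750; 2109750; 2109750; 2109750; 2109750].
End Data.

Theorem lemma6 (R : realType) :
  ((286%:R / 100%:R : R)%:E <= ereal_sup [set zval R k | k in [set k : nat | (0 < k)%N]])%E.
Proof.
have Hf : feasible 700 (av R Qd Pd) (dv R Qd Pd) (fv R Qd Fd).
  apply: feas; vm_compute; reflexivity.
have Hp : 0 < fv R Qd Fd + \sum_(1 <= j < 700.+1) dv R Qd Pd j.
  apply: pos; vm_compute; reflexivity.
have Ho : 286%:R / 100%:R <= objective 700 (av R Qd Pd) (dv R Qd Pd) (fv R Qd Fd).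
  apply: obj; vm_compute; reflexivity.
apply: (@le_trans _ _ (zval R 700)).
  rewrite /zval.
  have Hmem : [set x : \bar R | exists (a d : nat -> R) (f : R),
     [/\ feasible 700 a d f, 0 < f + \sum_(1 <= j < 700.+1) d j
        & x = (objective 700 a d f)%:E]] (objective 700 (av R Qd Pd) (dv R Qd Pd) (fv R Qd Fd))%:E.
    by exists (av R Qd Pd), (dv R Qd Pd), (fv R Qd Fd).
  apply: le_trans (ereal_sup_ubound Hmem).
  by rewrite lee_fin.
apply: ereal_sup_ubound.
by exists 700%N.
Qed.
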